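(* Let $M_1$ and $M_2$ be MUL-trees on the same set $S$ of labels. If $\Upsilon(M_1)=\Upsilon(M_2)$, then $M_1\cong M_2$. In particular, $m(M_1,M_2)=\frac12|\Upsilon(M_1)\bigtriangleup\Upsilon(M_2)|$ is a metric on the class of all MUL-trees labeled in $S$.
   Context: A MUL-tree (multi-labeled phylogenetic tree) over a finite set $S$ is a finite rooted tree whose leaves are each labeled by a non-empty subset of $S$ (different leaves may share labels). Isomorphism of MUL-trees is isomorphism of rooted trees preserving leaf label sets. The height of a node is the largest length of a path from it to a leaf. The nested label $\ell(v)$ is defined inductively: if $v$ is a leaf with label set $S_v$, $\ell(v)=S_v$; otherwise $\ell(v)$ is the multiset $\{\ell(v_1),\dots,\ell(v_k)\}$ of the nested labels of its children $v_1,\dots,v_k$. $\Upsilon(M)$ is the multiset of nested labels of all nodes of $M$ (each with multiplicity the number of nodes having it); $\bigtriangleup$ is multiset symmetric difference (multiplicity $|M_1(x)-M_2(x)|$) and $|\cdot|$ is the sum of multiplicities. *)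

(* Defs.v *)
From mathcomp Require Import all_boot all_order all_algebra.
Set Implicit Arguments. Unset Strict Implicit. Unset Printing Implicit Defensive.

Section MulTrees.
Variable S : finType.

(* A rooted tree: a leaf carries a label set, an internal node carries its
   (finite, ordered only for representation purposes) list of children. *)
Inductive mtree : Type :=
| MLeaf of {set S}
| MNode of seq mtree.

(* Well-formedness of a MUL-tree on S: leaf labels are non-empty subsets of S,
   and a node with no children is not allowed (it would be an unlabeled leaf). *)
Fixpoint wf_mtree (t : mtree) : bool :=
  match t with
  | MLeaf A => A != set0
  | MNode ts => (0 < size ts) && all wf_mtree ts
  end.

Definition mdflt : mtree := MLeaf set0.

Inductive mtree_iso : mtree -> mtree -> Prop :=
| iso_leaf (A : {set S}) : mtree_iso (MLeaf A) (MLeaf A)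
| iso_node (ts us : seq mtree) (s : seq nat) :
    size us = size ts ->
    perm_eq s (iota 0 (size ts)) ->
    (forall i, i < size ts -> mtree_iso (nth mdflt ts i) (nth mdflt us (nth 0 s i))) ->
    mtree_iso (MNode ts) (MNode us).

(* A nested label is either a label set (leaf) or a finite
   multiset of nested labels.  Finite multisets are represented canonically by
   lists sorted w.r.t. the (total, injective) order induced by [pickle], so that
   two nested labels are equal as nested multisets iff they are equal terms. *)
Definition nlabel := GenTree.tree {set S}.

Definition msort (s : seq nlabel) : seq nlabel :=
  sort (fun a b => pickle a <= pickle b) s.

Fixpoint nested_label (t : mtree) : nlabel :=
  match t with
  | MLeaf A => GenTree.Leaf A
  | MNode ts => GenTree.Node 0 (msort (map nested_label ts))
  end.

(* Upsilon(M): the multiset (as a list, i.e. up to permutation) of the nested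
   labels of all nodes of M, each node contributing once. *)
Fixpoint Upsilon (t : mtree) : seq nlabel :=
  nested_label t ::
  match t with
  | MLeaf _ => [::]
  | MNode ts => flatten (map Upsilon ts)
  end.

(* |A symdiff B| for finite multisets represented as lists: the sum over all
   distinct elements x of |A(x) - B(x)|. *)
Definition msymdiff_size (A B : seq nlabel) : nat :=
  \sum_(x <- undup (A ++ B)) ((count_mem x A - count_mem x B) + (count_mem x B - count_mem x A)).

Definition mdist (M1 M2 : mtree) : rat :=
  ((msymdiff_size (Upsilon M1) (Upsilon M2))%:R / 2)%R.

End MulTrees.

(* Main.v *)
Require Import Defs.
From mathcomp Require Import all_boot all_order all_algebra.
From mathcomp Require Import zify.
Import Order.TTheory GRing.Theory Num.Theory.
Set Implicit Arguments. Unset Strict Implicit.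

Section Helpers.
Variable S : finType.
Notation tr := (mtree S).
Notation d := (mdflt S).

Lemma mtree_ind' (P : tr -> Prop) :
  (forall A, P (MLeaf A)) ->
  (forall ts, (forall i, i < size ts -> P (nth d ts i)) -> P (MNode ts)) ->
  forall t, P t.
Proof.
move=> HL HN; fix F 1; case=> [A|ts]; first exact: HL.
apply: HN; move: ts; fix G 1; case=> [|t ts] [|i] Hi.
- clear F G; by move: Hi.
- clear F G; by move: Hi.
- exact: (F t).
- exact: (G ts i Hi).
Qed.

Lemma perm_map_idx (T : Type) (U : eqType) (f : T -> U) (x0 : T) ts us :
  perm_eq (map f ts) (map f us) -> size us = size ts /\
  exists s, perm_eq s (iota 0 (size ts)) /\
  forall i, i < size ts -> f (nth x0 ts i) = f (nth x0 us (nth 0 s i)).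
Proof.
elim: ts us => [|t ts IH] us H.
  have := perm_size H; rewrite /= size_map => /esym/size0nil ->.
  by split=> //; exists [::].
have : f t \in map f us by rewrite -(perm_mem H) mem_head.
case/(nthP (f x0)) => j; rewrite size_map => ju; rewrite (nth_map x0) // => Hj.
set us' := take j us ++ drop j.+1 us.
have Eus : us = take j us ++ nth x0 us j :: drop j.+1 us by rewrite -drop_nth // cat_take_drop.
have Hp : perm_eq (map f ts) (map f us').
  rewrite -(perm_cons (f t)); apply: (perm_trans H).
  rewrite {1}Eus /us' !map_cat /= Hj -cat1s perm_catCA /=; exact: perm_refl.
have Hsz : size us = (size us').+1 by rewrite {1}Eus /us' !size_cat /=; lia.
have Hnth : forall k, k < size us' -> nth x0 us' k = nth x0 us (bump j k).
  move=> k kl; rewrite /us' nth_cat size_take ju /bump.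
  case: ltnP => kj; first by rewrite nth_take // add0n.
  rewrite nth_drop add1n; congr nth; lia.
have [Hs' [s' [Ps' Hf']]] := IH _ Hp.
split; first by rewrite Hsz Hs'.
exists (j :: map (bump j) s'); split.
  have Us : uniq (j :: map (bump j) s').
    rewrite /= map_inj_uniq ?(perm_uniq Ps') ?iota_uniq; last exact: can_inj (bumpK j).
    rewrite andbT; apply/mapP => -[k _ /eqP]; by rewrite (negbTE (neq_bump j k)).
  apply: uniq_perm => //; first exact: iota_uniq.
  move=> x; rewrite in_cons mem_iota add0n /=.
  apply/idP/idP.
    case/orP => [/eqP->|/mapP[k]]; first by rewrite -Hs' -Hsz.
    rewrite (perm_mem Ps') mem_iota add0n /= => kl ->; rewrite /bump; lia.
  move=> xl; case: (eqVneq x j) => //= xj.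
  apply/mapP; exists (unbump j x); last by rewrite unbumpKcond (negbTE xj).
  rewrite (perm_mem Ps') mem_iota add0n /= /unbump; lia.
case=> [|i] /= il; first by rewrite Hj.
rewrite (nth_map 0); last by rewrite (perm_size Ps') size_iota.
rewrite Hf' // -Hnth //.
have : nth 0 s' i \in iota 0 (size ts) by rewrite -(perm_mem Ps') mem_nth // (perm_size Ps') size_iota.
by rewrite mem_iota -Hs'.
Qed.


Lemma perm_flatten_map (A : eqType) (X : eqType) (F G : A -> seq X) l :
  (forall x, x \in l -> perm_eq (F x) (G x)) ->
  perm_eq (flatten (map F l)) (flatten (map G l)).
Proof.
elim: l => [|a l IH] H //=.
apply: perm_cat; first by apply: H; rewrite mem_head.
by apply: IH => x xl; apply: H; rewrite in_cons xl orbT.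
Qed.

Lemma perm_flatten_idx (X : eqType) (g : tr -> seq X) ts us s :
  size us = size ts -> perm_eq s (iota 0 (size ts)) ->
  (forall i, i < size ts -> perm_eq (g (nth d ts i)) (g (nth d us (nth 0 s i)))) ->
  perm_eq (flatten (map g ts)) (flatten (map g us)).
Proof.
move=> Hsz Ps H.
rewrite -{1}(mkseq_nth d ts) -{1}(mkseq_nth d us) /mkseq -!map_comp.
apply: (@perm_trans _ (flatten (map (g \o nth d us) s))).
  have -> : s = map (nth 0 s) (iota 0 (size ts)).
    by rewrite -[in RHS](size_iota 0 (size ts)) -(perm_size Ps) -/(mkseq _ _) mkseq_nth.
  rewrite -map_comp; apply: perm_flatten_map => x; rewrite mem_iota add0n /=.
  exact: H.
by apply/perm_flatten/perm_map; rewrite Hsz.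
Qed.

Fixpoint nsize (x : nlabel S) : nat :=
  match x with GenTree.Leaf _ => 1 | GenTree.Node _ l => (sumn (map nsize l)).+1 end.

Lemma mem_sumn (l : seq (nlabel S)) y : y \in l -> nsize y <= sumn (map nsize l).
Proof.
elim: l => [|a l IH] //=; rewrite in_cons => /orP [/eqP->|/IH]; first exact: leq_addr.
move=> h; exact: leq_trans h (leq_addl _ _).
Qed.

Lemma mem_flatten_idx (ts : seq tr) x :
  x \in flatten (map (@Upsilon S) ts) -> exists2 i, i < size ts & x \in Upsilon (nth d ts i).
Proof.
elim: ts => [|t ts IH] //=; rewrite mem_cat => /orP [h|/IH [i il h]].
  by exists 0.
by exists i.+1.
Qed.

Lemma up_le (t : tr) : forall x, x \in Upsilon t -> x = nested_label t \/ nsize x < nsize (nested_label t).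
Proof.
elim/mtree_ind': t => [A|ts IH] x /=.
  by rewrite inE => /eqP->; left.
rewrite in_cons => /orP [/eqP->|]; first by left.
case/mem_flatten_idx => i il /IH h; right.
have h2 : nsize (nested_label (nth d ts i)) <= sumn (map nsize (msort (map (@nested_label S) ts))).
  apply: mem_sumn; rewrite mem_sort; apply/(nthP (nested_label (mdflt S))).
  by exists i; rewrite ?size_map // (nth_map d).
rewrite ltnS; case: (h il) => [->//|]; move=> /ltnW h3; exact: leq_trans h3 h2.
Qed.

Lemma nl_in (t : tr) : nested_label t \in Upsilon t.
Proof. by case: t => [A|ts] /=; rewrite mem_head. Qed.

Lemma head_eq (t u : tr) : perm_eq (Upsilon t) (Upsilon u) -> nested_label t = nested_label u.
Proof.
move=> P.
have h1 : nested_label t \in Upsilon u by rewrite -(perm_mem P) nl_in.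
have h2 : nested_label u \in Upsilon t by rewrite (perm_mem P) nl_in.
case: (up_le h1) => // l1; case: (up_le h2) => [->//|l2].
have := ltn_trans l1 l2; by rewrite ltnn.
Qed.

Lemma leT_total : total (fun a b : nlabel S => pickle a <= pickle b).
Proof. move=> a b; exact: leq_total. Qed.
Lemma leT_trans : transitive (fun a b : nlabel S => pickle a <= pickle b).
Proof. move=> a b c; exact: leq_trans. Qed.
Lemma leT_anti : antisymmetric (fun a b : nlabel S => pickle a <= pickle b).
Proof. move=> a b h; apply: (pcan_inj (@pickleK (nlabel S))); exact: anti_leq. Qed.

Lemma nl_iso (t : tr) : forall u, nested_label t = nested_label u -> mtree_iso t u.
Proof.
elim/mtree_ind': t => [A|ts IH] [B|us] //=.
  by case=> ->; constructor.
case=> /(perm_sortP leT_total leT_trans leT_anti) /(perm_map_idx d) [Hsz [s [Ps H]]].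
apply: (iso_node Hsz Ps) => i il; exact: (IH i il _ (H i il)).
Qed.

Lemma iso_perm (t u : tr) : mtree_iso t u -> perm_eq (Upsilon t) (Upsilon u).
Proof.
elim=> [A|ts us s Hsz Ps _ IH] //=.
have Hf := perm_flatten_idx Hsz Ps IH.
suff -> : msort (map (@nested_label S) ts) = msort (map (@nested_label S) us) by rewrite perm_cons.
apply/(perm_sortP leT_total leT_trans leT_anti).
have E : forall l : seq tr, map (@nested_label S) l = flatten (map (fun t => [:: nested_label t]) l).
  by elim=> //= a l ->.
rewrite !E; apply: (perm_flatten_idx Hsz Ps) => i il.
by rewrite (head_eq (IH i il)).
Qed.


Notation NL := (nlabel S).
Definition F (A B : seq NL) x :=
  ((count_mem x A - count_mem x B) + (count_mem x B - count_mem x A))%N.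

Lemma sd_U (A B U : seq NL) : uniq U -> {subset A ++ B <= U} ->
  msymdiff_size A B = \sum_(x <- U) F A B x.
Proof.
move=> uU sU; rewrite /msymdiff_size.
rewrite [RHS](bigID [pred x | x \in A ++ B]) [X in _ = _ + X]big1 ?addn0; last first.
  move=> x /=; rewrite mem_cat negb_or => /andP [xA xB].
  by rewrite /F !(count_memPn xA) !(count_memPn xB).
rewrite -[RHS]big_filter /F; apply: perm_big; apply: uniq_perm.
- exact: undup_uniq.
- exact: filter_uniq.
move=> x; rewrite mem_undup mem_filter /=.
by apply/idP/idP => [h|/andP[]//]; rewrite h sU.
Qed.

Lemma sd_sym (A B : seq NL) : msymdiff_size A B = msymdiff_size B A.
Proof.
have sU : {subset A ++ B <= undup (B ++ A)}.
  by move=> x; rewrite mem_undup !mem_cat orbC.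
rewrite (sd_U (undup_uniq _) sU) /msymdiff_size /F.
by apply: eq_bigr => x _; rewrite addnC.
Qed.

Lemma sd_tri (A B C : seq NL) :
  msymdiff_size A C <= msymdiff_size A B + msymdiff_size B C.
Proof.
set U := undup (A ++ B ++ C).
have uU : uniq U by exact: undup_uniq.
rewrite (@sd_U A C U) // ?(@sd_U A B U) // ?(@sd_U B C U) //; first last.
- by move=> x; rewrite mem_undup !mem_cat; case/orP=> ->; rewrite ?orbT.
- by move=> x; rewrite mem_undup !mem_cat; case/orP=> ->; rewrite ?orbT.
- by move=> x; rewrite mem_undup !mem_cat; case/orP=> ->; rewrite ?orbT.
rewrite -big_split /=; apply: leq_sum => x _; rewrite /F; lia.
Qed.

Lemma sd0 (A B : seq NL) : (msymdiff_size A B == 0) = perm_eq A B.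
Proof.
rewrite /msymdiff_size sum_nat_seq_eq0 /perm_eq.
apply/allP/allP => H x xs.
  have := H x; rewrite mem_undup => /(_ xs) /= /eqP h; apply/eqP; lia.
have := H x; rewrite -mem_undup => /(_ xs) /= /eqP h; apply/eqP; lia.
Qed.

End Helpers.

Unset Implicit Arguments. Set Strict Implicit.

Theorem proposition6 (S : finType) :
  (forall M1 M2 : mtree S, wf_mtree M1 -> wf_mtree M2 ->
     perm_eq (Upsilon M1) (Upsilon M2) -> mtree_iso M1 M2)
  /\
  (forall M1 M2 M3 : mtree S, wf_mtree M1 -> wf_mtree M2 -> wf_mtree M3 ->
     [/\ (0 <= mdist M1 M2)%R,
         mdist M1 M2 = 0%R <-> mtree_iso M1 M2,
         mdist M1 M2 = mdist M2 M1
       & (mdist M1 M3 <= mdist M1 M2 + mdist M2 M3)%R]).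
Proof.
split.
  by move=> M1 M2 _ _ P; apply: nl_iso; exact: head_eq P.
move=> M1 M2 M3 _ _ _; rewrite /mdist; split.
- by rewrite divr_ge0 // ler0n.
- split => [h|h].
    move/eqP: h; rewrite mulf_eq0 invr_eq0 !pnatr_eq0 orbF sd0 => P.
    by apply: nl_iso; exact: head_eq P.
  have /eqP -> : msymdiff_size (Upsilon M1) (Upsilon M2) == 0 by rewrite sd0 iso_perm.
  by rewrite mul0r.
- by rewrite sd_sym.
- by rewrite -mulrDl ler_pM2r ?invr_gt0 // -natrD ler_nat sd_tri.
Qed.
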